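(* Let $\mathcal{F}=(A,R)$ and $\mathcal{G}=(A,R')$ be argumentation frameworks with $R\subseteq R'$ and $\mathrm{conf}(\mathcal{F})=\mathrm{conf}(\mathcal{G})$, and let $S\in\mathit{cf1.5}(\mathcal{F})$. Then $S\in\mathit{cf1.5}(\mathcal{G})$. In particular, $\mathit{cf1.5}$ is both $\preceq^E_\cap$-skepticism adequate and $\preceq^E_W$-skepticism adequate.
   Context: An argumentation framework (AF) is $\mathcal{F}=(A_{\mathcal{F}},R_{\mathcal{F}})$ with $R_{\mathcal{F}}\subseteq A_{\mathcal{F}}\times A_{\mathcal{F}}$ (possibly infinite); $a\rightarrow b$ means $(a,b)\in R_{\mathcal{F}}$. $\mathrm{conf}(\mathcal{F})=\{(x,y):(x,y)\in R_{\mathcal{F}}\text{ or }(y,x)\in R_{\mathcal{F}}\}$. $\tau_1\preceq^E_\cap\tau_2$ iff $\bigcap_{S_1\in\tau_1}S_1\subseteq\bigcap_{S_2\in\tau_2}S_2$; $\tau_1\preceq^E_W\tau_2$ iff for every $S_2\in\tau_2$ there is $S_1\in\tau_1$ with $S_1\subseteq S_2$. A semantics $\sigma$ is $\preceq$-skepticism adequate if for any AFs $\mathcal{F},\mathcal{G}$ on the same argument set with $R_{\mathcal{F}}\supseteq R_{\mathcal{G}}$ and $\mathrm{conf}(\mathcal{F})=\mathrm{conf}(\mathcal{G})$, $\sigma(\mathcal{F})\preceq\sigma(\mathcal{G})$. $\mathcal{F}|_B=(A_{\mathcal{F}}\cap B,R_{\mathcal{F}}\cap(B\times B))$. Conflict-free: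 no $a,b\in S$ with $a\rightarrow b$; naive: $\subseteq$-maximal conflict-free. $\mathrm{SCC}(\mathcal{F})$: strongly connected components of the attack graph. $D_S(X)=\{b\in X:\exists a\in S\setminus X,\ a\rightarrow b\}$ (attacks taken in the framework under consideration). $S\in\mathit{cf1.5}(\mathcal{F})$ iff $S$ is conflict-free and for each $X\in\mathrm{SCC}(\mathcal{F})$, $S\cap X$ is a naive extension of $\mathcal{F}|_{X\setminus D_S(X)}$. *)

(* Defs.v *)
From Stdlib Require Import Relations.Relation_Operators.

Set Implicit Arguments.

Record AF (T : Type) := mkAF {
  args : T -> Prop;
  att : T -> T -> Prop;
  att_in : forall a b, att a b -> args a /\ args b
}.

Arguments args {T} _ _.
Arguments att {T} _ _ _.

Definition restrict {T} (F : AF T) (B : T -> Prop) : AF T.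
Proof.
  refine (@mkAF T (fun a => args F a /\ B a)
                  (fun a b => att F a b /\ B a /\ B b) _).
  intros a b [H [Ha Hb]]. destruct (att_in F a b H). tauto.
Defined.

Definition conf {T} (F : AF T) (x y : T) : Prop := att F x y \/ att F y x.

Definition conflict_free {T} (F : AF T) (S : T -> Prop) : Prop :=
  (forall a, S a -> args F a) /\ (forall a b, S a -> S b -> ~ att F a b).

Definition naive {T} (F : AF T) (S : T -> Prop) : Prop :=
  conflict_free F S /\
  forall S', conflict_free F S' -> (forall a, S a -> S' a) -> forall a, S' a -> S a.

Definition reach {T} (F : AF T) : T -> T -> Prop := clos_refl_trans T (att F).

Definition SCC {T} (F : AF T) (X : T -> Prop) : Prop :=
  exists a, args F a /\
    forall b, X b <-> (args F b /\ reach F a b /\ reach F b a).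

Definition D {T} (F : AF T) (S X : T -> Prop) (b : T) : Prop :=
  X b /\ exists a, S a /\ ~ X a /\ att F a b.

Definition cf15 {T} (F : AF T) (S : T -> Prop) : Prop :=
  conflict_free F S /\
  forall X, SCC F X ->
    naive (restrict F (fun b => X b /\ ~ D F S X b)) (fun a => S a /\ X a).

Definition le_cap {T} (t1 t2 : (T -> Prop) -> Prop) : Prop :=
  forall a, (forall S1, t1 S1 -> S1 a) -> (forall S2, t2 S2 -> S2 a).

Definition le_W {T} (t1 t2 : (T -> Prop) -> Prop) : Prop :=
  forall S2, t2 S2 -> exists S1, t1 S1 /\ forall a, S1 a -> S2 a.

Definition skepticism_adequate {T : Type}
  (le : ((T -> Prop) -> Prop) -> ((T -> Prop) -> Prop) -> Prop)
  (sigma : AF T -> (T -> Prop) -> Prop) : Prop :=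
  forall F G : AF T,
    (forall a, args F a <-> args G a) ->
    (forall a b, att G a b -> att F a b) ->
    (forall x y, conf F x y <-> conf G x y) ->
    le (sigma F) (sigma G).

(* Main.v *)
Require Import Defs.
From Stdlib Require Import Relations.Relation_Operators.

Lemma reach_mono {T} (F G : AF T) :
  (forall a b, att F a b -> att G a b) -> forall x y, reach F x y -> reach G x y.
Proof.
  intros H x y R. unfold reach in *. induction R.
  - apply rt_step; auto.
  - apply rt_refl.
  - eapply rt_trans; eauto.
Qed.

Lemma part1 : forall (T : Type) (F G : AF T),
      (forall a, args F a <-> args G a) ->
      (forall a b, att F a b -> att G a b) ->
      (forall x y, conf F x y <-> conf G x y) ->
      forall S, cf15 F S -> cf15 G S.
Proof.
  intros T F G Hargs Hatt Hconf S [[HSa HScf] HS].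
  assert (cfG : conflict_free G S).
  { split.
    - intros a Ha; apply Hargs; auto.
    - intros a b Ha Hb Hab.
      destruct (proj2 (Hconf a b) (or_introl Hab)) as [H|H]; [exact (HScf a b Ha Hb H) | exact (HScf b a Hb Ha H)]. }
  split; [exact cfG|].
  intros Y [y [Hy HY]].
  split.
  - split.
    + intros a [Sa Ya]. simpl. split; [exact (proj1 cfG a Sa)|]. split; [auto|].
      intros [_ [a' [Sa' [nYa' Hatt']]]]. exact (proj2 cfG _ _ Sa' Sa Hatt').
    + intros a b [Sa _] [Sb _] Hab. simpl in Hab. destruct Hab as [Hab _].
      exact (proj2 cfG a b Sa Sb Hab).
  - intros S' [HS'a HS'cf] Hsub c Hc.
    simpl in HS'a, HS'cf.
    set (X := fun b => args F b /\ reach F c b /\ reach F b c).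
    destruct (HS'a c Hc) as [Gc [Yc nDc]].
    assert (HX : SCC F X).
    { exists c. split; [apply Hargs; auto|]. intros b; unfold X; tauto. }
    assert (XY : forall b, X b -> Y b).
    { intros b [Fb [Rcb Rbc]].
      apply HY in Yc. destruct Yc as [_ [Ryc Rcy]].
      apply HY. split; [apply Hargs; auto|]. split.
      - eapply rt_trans; [exact Ryc| exact (reach_mono F G Hatt _ _ Rcb)].
      - eapply rt_trans; [exact (reach_mono F G Hatt _ _ Rbc)| exact Rcy]. }
    assert (Xc : X c).
    { unfold X. split; [apply Hargs; auto|]. split; apply rt_refl. }
    destruct (HS X HX) as [_ Hmax].
    assert (H : S c /\ X c).
    { apply (Hmax (fun b => S' b /\ X b)); [| | split; auto].
      - split.
        + intros b [S'b Xb]. simpl. destruct (HS'a b S'b) as [Gb [Yb nDb]].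
          split; [apply Hargs; auto|]. split; [auto|].
          intros [_ [a [Sa [nXa Fab]]]].
          assert (nYa : ~ Y a).
          { intros Ya. assert (S'a : S' a) by (apply Hsub; split; auto).
            apply (HS'cf a b S'a S'b). split; [apply Hatt; auto|].
            split; [exact (proj2 (HS'a a S'a)) | exact (proj2 (HS'a b S'b))]. }
          apply nDb. split; [auto|]. exists a. split; [auto|]. split; [auto|]. apply Hatt; auto.
        + intros a b [S'a _] [S'b _] Hab. simpl in Hab. destruct Hab as [Hab _].
          apply (HS'cf a b S'a S'b). split; [apply Hatt; auto|].
          split; [exact (proj2 (HS'a a S'a)) | exact (proj2 (HS'a b S'b))].
      - intros b [Sb Xb]. split; [apply Hsub; split; auto|auto]. }
    split; [exact (proj1 H) | exact Yc].
Qed.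

Theorem theorem16 :
  (forall (T : Type) (F G : AF T),
      (forall a, args F a <-> args G a) ->
      (forall a b, att F a b -> att G a b) ->
      (forall x y, conf F x y <-> conf G x y) ->
      forall S, cf15 F S -> cf15 G S)
  /\ (forall T : Type, @skepticism_adequate T (@le_cap T) (@cf15 T))
  /\ (forall T : Type, @skepticism_adequate T (@le_W T) (@cf15 T)).
Proof.
  split; [exact part1|]. split.
  - intros T F G Hargs Hatt Hconf a H S2 HS2. apply H.
    apply (part1 T G F); auto; intros; [apply iff_sym, Hargs | apply iff_sym, Hconf].
  - intros T F G Hargs Hatt Hconf S2 HS2. exists S2. split; auto.
    apply (part1 T G F); auto; intros; [apply iff_sym, Hargs | apply iff_sym, Hconf].
Qed.
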